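(* With $d=\delta(1-\delta)$, $x(p)=\frac{p^2-d(1-p)^2}{p^2+d(1-p)^2}$ and $R_v^{\max}(n)=n\big(1-(1-x(p)^2)^{1/(2n)}\big)$ as the maximal saved resource for $n$ nodes (defined on the region $p^2\ge d(1-p)^2$, $p<1$), for every fixed $n\ge1$ and fixed $\delta\in[1/2,1)$, $R_v^{\max}(n)$ is a non-decreasing function of $p$ on that region; i.e., as the noisy state $\rho(p,\delta)$ becomes noisier (closer to the separable state $|01\rangle\langle01|$), the maximal saved resource increases.
   Context: $\rho(p,\delta)=p|01\rangle\langle01|+(1-p)|\zeta_\delta\rangle\langle\zeta_\delta|$ with $|\zeta_\delta\rangle=\sqrt\delta|00\rangle+\sqrt{1-\delta}|11\rangle$. In the $n$-node repeater where segment $S_1$ shares $\rho(p,\delta)$ and all $n$ free segments share the same pure state of concurrence $\mathcal{C}$, end-to-end optimal fully entangled fraction equal to that of $\rho(p,\delta)$ is achieved whenever $\frac{1+\sqrt{1-\mathcal{C}^{2n}}}{2}\le\frac{p^2}{p^2+d(1-p)^2}$; the saved resource is $R_v=n(1-\mathcal{C})$, and $R_v^{\max}(n)$ is its maximum over $\mathcal{C}$ satisfying this condition. *)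

(* Defs.v *)
From Stdlib Require Import Reals Lra.
Open Scope R_scope.

Definition dpar (delta : R) : R := delta * (1 - delta).

Definition xfun (delta p : R) : R :=
  (p ^ 2 - dpar delta * (1 - p) ^ 2) / (p ^ 2 + dpar delta * (1 - p) ^ 2).

Definition Rvmax (n : nat) (delta p : R) : R :=
  INR n * (1 - Rpower (1 - xfun delta p ^ 2) (1 / (2 * INR n))).

Definition region (delta p : R) : Prop :=
  0 <= p /\ p < 1 /\ dpar delta * (1 - p) ^ 2 <= p ^ 2.

(* Main.v *)
Require Import Defs.
From Stdlib Require Import Reals Lra Psatz.
Open Scope R_scope.

Lemma rpow_base_le (a b y : R) : 0 < a -> a <= b -> 0 <= y -> Rpower a y <= Rpower b y.
Proof.
  intros Ha Hab Hy. unfold Rpower.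
  assert (ln a <= ln b).
  { destruct (Rle_lt_or_eq_dec _ _ Hab) as [h|h].
    - left; apply ln_increasing; lra.
    - subst; lra. }
  assert (y * ln a <= y * ln b) by (apply Rmult_le_compat_l; lra).
  destruct (Rle_lt_or_eq_dec _ _ H0) as [h|h].
  - left; apply exp_increasing; lra.
  - rewrite h; lra.
Qed.

Theorem mainTheorem7 :
  forall (n : nat) (delta p1 p2 : R),
    (1 <= n)%nat ->
    1 / 2 <= delta < 1 ->
    region delta p1 -> region delta p2 ->
    p1 <= p2 ->
    Rvmax n delta p1 <= Rvmax n delta p2.
Proof.
  intros n delta p1 p2 Hn Hd [a1 [b1 c1]] [a2 [b2 c2]] Hp.
  unfold Rvmax, xfun in *.
  set (d := dpar delta) in *.
  assert (Hdp : 0 < d) by (unfold d, dpar; nra).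
  assert (HD1 : 0 < d * (1 - p1) ^ 2) by (apply Rmult_lt_0_compat; [lra| apply pow_lt; lra]).
  assert (HD2 : 0 < d * (1 - p2) ^ 2) by (apply Rmult_lt_0_compat; [lra| apply pow_lt; lra]).
  set (D1 := d * (1 - p1) ^ 2) in *. set (D2 := d * (1 - p2) ^ 2) in *.
  set (P1 := p1 ^ 2) in *. set (P2 := p2 ^ 2) in *.
  assert (HP1 : 0 <= P1) by (unfold P1; nra).
  assert (HP2 : 0 <= P2) by (unfold P2; nra).
  assert (Hcross : P1 * D2 <= P2 * D1).
  { unfold P1, P2, D1, D2.
    assert (p1 * (1 - p2) <= p2 * (1 - p1)) by nra.
    assert (0 <= p1 * (1 - p2)) by nra.
    assert ((p1 * (1 - p2))^2 <= (p2 * (1 - p1))^2) by nra.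
    nra. }
  set (x1 := (P1 - D1) / (P1 + D1)). set (x2 := (P2 - D2) / (P2 + D2)).
  assert (Hx1 : 0 <= x1 < 1).
  { unfold x1; split.
    - unfold Rdiv; apply Rmult_le_pos; [lra| apply Rlt_le, Rinv_0_lt_compat; lra].
    - apply Rmult_lt_reg_r with (P1 + D1); [lra|].
      unfold Rdiv; rewrite Rmult_assoc, Rinv_l; lra. }
  assert (Hx2 : 0 <= x2 < 1).
  { unfold x2; split.
    - unfold Rdiv; apply Rmult_le_pos; [lra| apply Rlt_le, Rinv_0_lt_compat; lra].
    - apply Rmult_lt_reg_r with (P2 + D2); [lra|].
      unfold Rdiv; rewrite Rmult_assoc, Rinv_l; lra. }
  assert (Hx12 : x1 <= x2).
  { unfold x1, x2. apply (Rmult_le_reg_r ((P1 + D1) * (P2 + D2))); [nra|].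
    replace ((P1 - D1) / (P1 + D1) * ((P1 + D1) * (P2 + D2))) with ((P1 - D1) * (P2 + D2))
      by (field; lra).
    replace ((P2 - D2) / (P2 + D2) * ((P1 + D1) * (P2 + D2))) with ((P2 - D2) * (P1 + D1))
      by (field; lra).
    nra. }
  assert (Hn' : 1 <= INR n) by (apply (le_INR 1); exact Hn).
  apply Rmult_le_compat_l; [lra|].
  assert (Rpower (1 - x2 ^ 2) (1 / (2 * INR n)) <= Rpower (1 - x1 ^ 2) (1 / (2 * INR n))).
  { apply rpow_base_le; [nra|nra|].
    apply Rlt_le, Rdiv_lt_0_compat; lra. }
  lra.
Qed.
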